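(* Let $G$ be a finite group and $\mathcal{P}$ a prime ideal of $\mathrm{Gh}(\underline{A}_G)$. For each $H\le G$ write $\mathcal{P}(G/H)=\widetilde{A}(H)\cap\prod_{I\le H}n_{I,H}\mathbb{Z}$ with integers $n_{I,H}\ge0$. Then for all $I\le H\le G$, the ideal $(n_{I,H})\subseteq\mathbb{Z}$ is either a prime ideal or all of $\mathbb{Z}$.
   Context: For $H\le G$, $\widetilde{A}(H)$ is the subring of $\prod_{I\le H}\mathbb{Z}$ of tuples $(a_I)_{I\le H}$ with $a_{hIh^{-1}}=a_I$ for $h\in H$; every ideal of $\widetilde{A}(H)$ is of the form $\widetilde{A}(H)\cap\prod_{I\le H}n_I\mathbb{Z}$ with unique $n_I\ge0$. $\mathrm{Gh}(\underline{A}_G)$ is the $G$-Tambara functor with $\mathrm{Gh}(\underline{A}_G)(G/H)=\widetilde{A}(H)$ and, for $H\le K$, $g\in G$, $I^g=g^{-1}Ig$: $\mathrm{res}^K_H(b)_L=b_L$; $\mathrm{tr}^K_H(a)_I=\sum_{kH\in K/H,\ I^k\le H}a_{I^k}$; $\mathrm{nm}^K_H(a)_I=\prod_{IgH\in I\backslash K/H}a_{I^g\cap H}$; $c_{g,H}(a)_J=a_{J^g}$ for $J\le gHg^{-1}$. A Tambara ideal is a collection of ideals $\mathcal{I}(G/H)$ closed under all restrictions, transfers, norms and conjugations; it is prime (Nakaoka) if it is not everything and whenever $a\in T(G/K_1)$, $b\in T(G/K_2)$ satisfy $\big(\mathrm{nm}^L_{g_1H_1g_1^{-1}}c_{g_1,H_1}\mathrm{res}^{K_1}_{H_1}(a)\big)\big(\mathrm{nm}^L_{g_2H_2g_2^{-1}}c_{g_2,H_2}\mathrm{res}^{K_2}_{H_2}(b)\big)\in\mathcal{I}(G/L)$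 for all $L,H_1,H_2\le G$, $g_1,g_2\in G$ with $H_i\le K_i$, $g_iH_ig_i^{-1}\le L$, then $a\in\mathcal{I}(G/K_1)$ or $b\in\mathcal{I}(G/K_2)$. *)

(* Defs.v *)
(* G is modelled as the whole finite group gT; subgroups of G
   are the elements of {group gT}. *)
From HB Require Import structures.
From mathcomp Require Import all_boot all_order all_algebra all_fingroup.
Set Implicit Arguments. Unset Strict Implicit. Unset Printing Implicit Defensive.
Import GRing.Theory.
Local Open Scope ring_scope.

Section Gh.
Variable gT : finGroupType.

(* Candidate elements of Gh(A_G)(G/H) = Atilde(H): integer tuples indexed by
   subgroups; see inA for the subring condition. *)
Definition ghel := {group gT} -> int.

(* a is (the canonical representative of) an element of Atilde(H):
   supported on subgroups I <= H, and invariant under H-conjugation. *)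
Definition inA (H : {group gT}) (a : ghel) : Prop :=
  (forall I : {group gT}, ~~ (I \subset H) -> a I = 0) /\
  (forall (h : gT) (I : {group gT}), h \in H -> I \subset H ->
     a (I :^ h)%G = a I).

Definition gh_zero : ghel := fun _ => 0.
Definition gh_add (a b : ghel) : ghel := fun I => a I + b I.
Definition gh_opp (a : ghel) : ghel := fun I => - a I.
Definition gh_mul (a b : ghel) : ghel := fun I => a I * b I.

Definition gh_res (K H : {group gT}) (b : ghel) : ghel :=
  fun L => if L \subset H then b L else 0.

(* tr^K_H (a)_I = sum_{kH in K/H, I^k <= H} a_{I^k}  for I <= K,
   with I^k = k^-1 I k = I :^ k; cosets kH are lcosets H K. *)
Definition gh_tr (K H : {group gT}) (a : ghel) : ghel :=
  fun I => if I \subset K then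
    \sum_(C in lcosets H K)
       (if (I :^ repr C)%g \subset H then a (I :^ repr C)%G else 0)
  else 0.

Definition gh_nm (K H : {group gT}) (a : ghel) : ghel :=
  fun I => if I \subset K then
    \prod_(C in [set ((I :* g) * H)%g | g in K])
       a (I :^ repr C :&: H)%G
  else 0.

Definition gh_conj (g : gT) (H : {group gT}) (a : ghel) : ghel :=
  fun J => if J \subset (H :^ g^-1)%g then a (J :^ g)%G else 0.

Definition is_ideal (H : {group gT}) (P : ghel -> Prop) : Prop :=
  (forall a, P a -> inA H a) /\ P gh_zero /\
  (forall a b, P a -> P b -> P (gh_add a b)) /\
  (forall a, P a -> P (gh_opp a)) /\
  (forall r a, inA H r -> P a -> P (gh_mul r a)).

Definition tambara_ideal (P : {group gT} -> ghel -> Prop) : Prop :=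
  (forall H, is_ideal H (P H)) /\
  (forall (K H : {group gT}) a, H \subset K -> P K a -> P H (gh_res K H a)) /\
  (forall (K H : {group gT}) a, H \subset K -> P H a -> P K (gh_tr K H a)) /\
  (forall (K H : {group gT}) a, H \subset K -> P H a -> P K (gh_nm K H a)) /\
  (forall (g : gT) (H : {group gT}) a, P H a -> P (H :^ g^-1)%G (gh_conj g H a)).

(* Nakaoka prime Tambara ideal *)
Definition prime_tambara_ideal (P : {group gT} -> ghel -> Prop) : Prop :=
  tambara_ideal P /\
  (exists (H : {group gT}) a, inA H a /\ ~ P H a) /\
  (forall (K1 K2 : {group gT}) a b, inA K1 a -> inA K2 b ->
     (forall (L H1 H2 : {group gT}) (g1 g2 : gT),
        H1 \subset K1 -> H2 \subset K2 ->
        (H1 :^ g1^-1)%g \subset L -> (H2 :^ g2^-1)%g \subset L ->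
        P L (gh_mul
              (gh_nm L (H1 :^ g1^-1)%G (gh_conj g1 H1 (gh_res K1 H1 a)))
              (gh_nm L (H2 :^ g2^-1)%G (gh_conj g2 H2 (gh_res K2 H2 b))))) ->
     P K1 a \/ P K2 b).

End Gh.

(* Main.v *)
Require Import Defs.
From HB Require Import structures.
From mathcomp Require Import all_boot all_order all_algebra all_fingroup.
From mathcomp Require Import zify ring.
Import Order.TTheory GRing.Theory Num.Theory.

Set Implicit Arguments. Unset Strict Implicit.
Section Aux.
Variable gT : finGroupType.
Local Open Scope ring_scope.

Definition is01 (v : int) := (v == 0) || (v == 1).

Definition Nn (L K J : {group gT}) : nat :=
  #|[set ((J :* g) * K)%g | g in L]|.

Lemma nm_scale (L K : {group gT}) (f g : ghel gT) (c : int) :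
  (forall J, g J = c * f J) ->
  forall J, gh_nm L K g J = c ^+ Nn L K J * gh_nm L K f J.
Proof.
move=> Hg J; rewrite /gh_nm; case: ifP => _; last by rewrite mulr0.
under eq_bigr => C _ do rewrite Hg.
by rewrite big_split /= prodr_const.
Qed.

Lemma conj_res_scale (g : gT) (K H' : {group gT}) (f : ghel gT) (c : int) J :
  gh_conj g H' (gh_res K H' (fun J => c * f J)) J =
  c * gh_conj g H' (gh_res K H' f) J.
Proof.
rewrite /gh_conj /gh_res; case: ifP => _; last by rewrite mulr0.
by case: ifP => _; rewrite ?mulr0.
Qed.

Lemma nm01 (L K : {group gT}) (f : ghel gT) :
  (forall J, is01 (f J)) -> forall J, is01 (gh_nm L K f J).
Proof.
move=> Hf J; rewrite /gh_nm; case: ifP => _; last by [].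
apply: (big_ind is01) => //.
by move=> u v /orP[] /eqP-> /orP[] /eqP->; rewrite /is01 ?mul0r ?mulr0 ?mulr1.
Qed.

Lemma conjres01 (g : gT) (K H' : {group gT}) (f : ghel gT) :
  (forall J, is01 (f J)) -> forall J, is01 (gh_conj g H' (gh_res K H' f) J).
Proof.
move=> Hf J; rewrite /gh_conj /gh_res; case: ifP => _ //.
by case: ifP => _.
Qed.

Lemma exp_transfer (m x : int) (N N' : nat) (u u' : int) :
  1 < m -> is01 u -> is01 u' -> m ^+ N * u = m ^+ N' * u' ->
  x ^+ N * u = x ^+ N' * u'.
Proof.
move=> m1 /orP[] /eqP-> /orP[] /eqP->; rewrite ?mulr0 ?mulr1 //.
- move=> /esym/eqP; rewrite expf_eq0 => /andP[_ /eqP m0].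
  by move: m1; rewrite m0.
- move=> /eqP; rewrite expf_eq0 => /andP[_ /eqP m0].
  by move: m1; rewrite m0.
move=> E; suff -> : N = N' by [].
have mono := ltr_eXn2l m1.
case: (ltngtP N N') => // lt.
  by have := mono N N'; rewrite lt E ltxx.
by have := mono N' N; rewrite lt E ltxx.
Qed.

Lemma dvd_combine (d x y : int) (N1 N2 : nat) (u1 u2 : int) :
  (d %| (x * y) ^+ N2 * u2)%Z -> (d %| (x * y) ^+ N1 * u1)%Z ->
  (d %| x ^+ N1 * u1 * (y ^+ N2 * u2))%Z.
Proof.
case: (leqP N1 N2) => le d2 d1.
  have -> : x ^+ N1 * u1 * (y ^+ N2 * u2) = ((x * y) ^+ N1 * u1) * (u2 * y ^+ (N2 - N1)).
    rewrite -{1}(subnKC le) exprD exprMn; ring.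
  exact: dvdz_mulr.
have le' : (N2 <= N1)%N by apply: ltnW.
have -> : x ^+ N1 * u1 * (y ^+ N2 * u2) = ((x * y) ^+ N2 * u2) * (u1 * x ^+ (N1 - N2)).
  rewrite -{1}(subnKC le') exprD exprMn; ring.
exact: dvdz_mulr.
Qed.
End Aux.
Arguments Nn {gT}.

Theorem lemma4p4 (gT : finGroupType) (P : {group gT} -> ghel gT -> Prop)
  (n : {group gT} -> {group gT} -> nat) :
  prime_tambara_ideal P ->
  (forall (H I : {group gT}) (h : gT), I \subset H -> h \in H ->
     n (I :^ h)%G H = n I H) ->
  (forall (H : {group gT}) (a : ghel gT),
     P H a <-> (inA H a /\
                forall I : {group gT}, I \subset H -> ((n I H)%:Z %| a I)%Z)) ->
  forall I H : {group gT}, I \subset H ->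
    n I H = 0%N \/ n I H = 1%N \/ prime (n I H).
Proof.
move=> Hprime Hconjn Hchar I H IH.
set m := n I H.
have [->|m0] := eqVneq m 0%N; first by left.
have [->|m1] := eqVneq m 1%N; first by right; left.
case: (boolP (prime m)) => pm; first by right; right.
exfalso.
have m_gt1 : (1 < m)%N by case: m m0 m1 {pm} => [|[|]].
set x := pdiv m.
have px := pdiv_prime m_gt1.
have xdvd : (x %| m)%N := pdiv_dvd m.
set y := (m %/ x)%N.
have Emxy : m = (x * y)%N by rewrite /y mulnC divnK.
have x1 : (1 < x)%N by apply: prime_gt1.
have xm : (x < m)%N.
  have xle : (x <= m)%N by apply: dvdn_leq => //; lia.
  rewrite ltn_neqAle xle andbT.
  by apply/eqP => Ex; move: pm; rewrite -Ex px.
have y1 : (1 < y)%N.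
  move: Emxy xm; clearbody y; case: y => [|[|y]] // ->; rewrite ?muln0 ?muln1 ?ltnn //.
have ym : (y < m)%N.
  rewrite Emxy -{1}(mul1n y) ltn_mul2r; lia.
pose cI (J : {group gT}) := [exists h in H, gval J == (I :^ h)%g].
pose e : ghel gT := fun J => if cI J then 1%R else 0%R.
have e01 : forall J, is01 (e J) by move=> J; rewrite /e; case: ifP.
have cI_conj : forall (J : {group gT}) h', h' \in H -> cI (J :^ h')%G = cI J.
  move=> J h' hH; apply/existsP/existsP => -[h /andP[hH' /eqP E]].
    exists (h * h'^-1)%g; rewrite groupM ?groupV //=.
    by rewrite conjsgM -E /= conjsgK.
  exists (h * h')%g; rewrite groupM //=.
  by rewrite conjsgM -E.
have cI_sub : forall J : {group gT}, cI J -> J \subset H.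
  move=> J /existsP[h /andP[hH /eqP ->]].
  by rewrite -(conjGid hH) conjSg.
have scale_inA : forall c : int, inA H (fun J => c * e J)%R.
  move=> c; split.
    move=> J nJ; rewrite /e; case: ifP => [/cI_sub|]; last by rewrite GRing.mulr0.
    by rewrite (negbTE nJ).
  by move=> h J hH JH; rewrite /e cI_conj.
have eI : e I = 1%R.
  have cII : cI I by apply/existsP; exists 1%g; rewrite group1 conjsg1 /=.
  by rewrite /e cII.
pose a : ghel gT := fun J => (x%:Z * e J)%R.
pose b : ghel gT := fun J => (y%:Z * e J)%R.
pose z : ghel gT := fun J => (m%:Z * e J)%R.
have notP : forall c : nat, (0 < c < m)%N -> ~ P H (fun J => c%:Z * e J)%R.
  move=> c /andP[c0 cm] /Hchar [_ /(_ I IH)]; rewrite eI GRing.mulr1.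
  rewrite dvdzE /= => /dvdn_leq; rewrite /m; lia.
have Pz : P H z.
  apply/Hchar; split; first exact: scale_inA.
  move=> J JH; rewrite /z /e; case: ifP => [|_]; last by rewrite GRing.mulr0 dvdz0.
  move=> /existsP[h /andP[hH /eqP E]].
  have -> : J = (I :^ h)%G by apply: val_inj.
  by rewrite Hconjn // GRing.mulr1.
case: Hprime => [[Hid [Hres [Htr [Hnm Hconj]]]] [_ Hpr]].
have [] := Hpr H H a b (scale_inA _) (scale_inA _).
2: by apply: (notP x); lia.
2: by apply: (notP y); lia.
move=> L H1 H2 g1 g2 s1 s2 t1 t2.
set u1 := gh_nm L (H1 :^ g1^-1)%G (gh_conj g1 H1 (gh_res H H1 e)).
set u2 := gh_nm L (H2 :^ g2^-1)%G (gh_conj g2 H2 (gh_res H H2 e)).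
set N1 := Nn L (H1 :^ g1^-1)%G.
set N2 := Nn L (H2 :^ g2^-1)%G.
have Ea : forall (c : int) (K' : {group gT}) g J, gh_nm L (K' :^ g^-1)%G
   (gh_conj g K' (gh_res H K' (fun J => c * e J)%R)) J =
   (c ^+ Nn L (K' :^ g^-1)%G J * gh_nm L (K' :^ g^-1)%G (gh_conj g K' (gh_res H K' e)) J)%R.
  move=> c K' g J; apply: nm_scale => J'; exact: conj_res_scale.
have u101 : forall J, is01 (u1 J) by apply: nm01; apply: conjres01.
have u201 : forall J, is01 (u2 J) by apply: nm01; apply: conjres01.
have Hv1 := Hnm L _ _ t1 (Hconj g1 H1 _ (Hres H H1 z s1 Pz)).
have Hv2 := Hnm L _ _ t2 (Hconj g2 H2 _ (Hres H H2 z s2 Pz)).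
move/Hchar: Hv1 => [[_ inv1] dv1].
move/Hchar: Hv2 => [[_ inv2] dv2].
apply/Hchar; split; first split.
- move=> J nJ; rewrite /gh_mul /gh_nm (negbTE nJ); exact: GRing.mul0r.
- move=> h J hL JL; rewrite /gh_mul !Ea.
  have m1' : (1 < m%:Z)%R by rewrite ltz_nat.
  have E1 := inv1 h J hL JL; rewrite !Ea in E1.
  have E2 := inv2 h J hL JL; rewrite !Ea in E2.
  rewrite (exp_transfer x%:Z m1' (u101 _) (u101 _) E1).
  by rewrite (exp_transfer y%:Z m1' (u201 _) (u201 _) E2).
move=> J JL; rewrite /gh_mul !Ea.
have := dv1 J JL; have := dv2 J JL; rewrite !Ea -/u1 -/u2 -/(N1 J) -/(N2 J).
rewrite Emxy PoszM; exact: dvd_combine.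
Qed.
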